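(* Let $X$ be a Banach lattice and $F\colon X^*\to\mathbb R\cup\{+\infty\}$ a proper, weak-$*$ lower semicontinuous function. If $F$ is substitutable, then it is convex.
   Context: Banach lattice: Banach space with lattice partial order ($\wedge,\vee$) compatible with addition and nonnegative scaling, with $|\phi_1|\leq|\phi_2|\Rightarrow\|\phi_1\|\leq\|\phi_2\|$. $X^*$ carries the dual order ($\mu\leq\nu$ iff $\langle\mu,\phi\rangle\leq\langle\nu,\phi\rangle$ for all $\phi\geq0$) and is a Banach lattice; $\mu^+=\mu\vee0$, $[a,b]=\{m:a\leq m\leq b\}$. $F$ is substitutable if for all $\mu_1,\mu_2\in X^*$ and every $t_{21}\in[0,(\mu_2-\mu_1)^+]$ there is $t_{12}\in[0,(\mu_1-\mu_2)^+]$ with $F(\mu_1+t_{21}-t_{12})+F(\mu_2-t_{21}+t_{12})\leq F(\mu_1)+F(\mu_2)$. *)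

(* Defs.v *)
From HB Require Import structures.
From mathcomp Require Import all_boot all_order all_algebra.
From mathcomp Require Import all_classical all_reals all_analysis.
Set Implicit Arguments. Unset Strict Implicit. Unset Printing Implicit Defensive.
Import Order.TTheory GRing.Theory Num.Theory.
Import numFieldNormedType.Exports.
Local Open Scope ring_scope.

Section BanachLatticeDefs.
Context {R : realType} {X : normedModType R}.

Definition vector_lattice (le : X -> X -> Prop) (meet join : X -> X -> X) : Prop :=
  (forall x, le x x) /\
  (forall x y, le x y -> le y x -> x = y) /\
  (forall x y z, le x y -> le y z -> le x z) /\
  (forall x y, le x (join x y) /\ le y (join x y) /\
     forall z, le x z -> le y z -> le (join x y) z) /\
  (forall x y, le (meet x y) x /\ le (meet x y) y /\
     forall z, le z x -> le z y -> le z (meet x y)) /\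
  (forall x y z, le x y -> le (x + z) (y + z)) /\
  (forall (a : R) x y, 0 <= a -> le x y -> le (a *: x) (a *: y)).

Definition lat_abs (join : X -> X -> X) (x : X) : X := join x (- x).

(* Banach lattice (completeness of X is imposed by its type in the theorem). *)
Definition banach_lattice (le : X -> X -> Prop) (meet join : X -> X -> X) : Prop :=
  vector_lattice le meet join /\
  (forall x y, le (lat_abs join x) (lat_abs join y) -> `|x| <= `|y|).

Definition is_dual (mu : X -> R) : Prop :=
  (forall (a : R) (x y : X), mu (a *: x + y) = a * mu x + mu y) /\ continuous mu.

Definition dual_le (le : X -> X -> Prop) (mu nu : X -> R) : Prop :=
  forall phi, le 0 phi -> mu phi <= nu phi.

Definition dual_pos_part (le : X -> X -> Prop) (mu p : X -> R) : Prop :=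
  is_dual p /\ dual_le le mu p /\ dual_le le (fun=> 0) p /\
  (forall m, is_dual m -> dual_le le mu m -> dual_le le (fun=> 0) m -> dual_le le p m).

Definition dual_proper (F : (X -> R) -> \bar R) : Prop :=
  (forall mu, is_dual mu -> F mu != -oo%E) /\
  (exists mu, is_dual mu /\ (F mu < +oo)%E).

(* weak-* lower semicontinuity on X^*, via basic weak-* neighbourhoods
   {nu : |nu(phi_i) - mu(phi_i)| < e, i = 1..n}. *)
Definition weakstar_lsc (F : (X -> R) -> \bar R) : Prop :=
  forall mu, is_dual mu -> forall c : R, (c%:E < F mu)%E ->
  exists (s : seq X) (e : R), 0 < e /\
    forall nu, is_dual nu -> (forall phi, phi \in s -> `|nu phi - mu phi| < e) ->
      (c%:E < F nu)%E.

Definition substitutable (le : X -> X -> Prop) (F : (X -> R) -> \bar R) : Prop :=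
  forall mu1 mu2, is_dual mu1 -> is_dual mu2 ->
  forall p q, dual_pos_part le (mu2 \- mu1) p -> dual_pos_part le (mu1 \- mu2) q ->
  forall t21, is_dual t21 -> dual_le le (fun=> 0) t21 -> dual_le le t21 p ->
  exists t12, is_dual t12 /\ dual_le le (fun=> 0) t12 /\ dual_le le t12 q /\
    (F (fun x => mu1 x + t21 x - t12 x)%R + F (fun x => mu2 x - t21 x + t12 x)%R
       <= F mu1 + F mu2)%E.

Definition dual_convex (F : (X -> R) -> \bar R) : Prop :=
  forall mu nu, is_dual mu -> is_dual nu -> forall t : R, 0 < t < 1 ->
    (F (fun x => t * mu x + (1 - t) * nu x)%R <= (t%:E * F mu + (1 - t)%R%:E * F nu)%E)%E.

End BanachLatticeDefs.

(* Main.v *)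
Require Import Defs.
From HB Require Import structures.
From mathcomp Require Import all_boot all_order all_algebra.
From mathcomp Require Import all_classical all_reals all_analysis.
From mathcomp Require Import ring lra zify.
Set Implicit Arguments. Unset Strict Implicit. Unset Printing Implicit Defensive.
Import Order.TTheory GRing.Theory Num.Theory.
Import numFieldNormedType.Exports.
Local Open Scope ring_scope.

Section Lat.
Variables (R : realType) (X : normedModType R).
Variables (le : X -> X -> Prop) (meet join : X -> X -> X).
Hypothesis HL : banach_lattice le meet join.

Lemma Lrefl x : le x x.
Proof. by move: HL; rewrite /banach_lattice /vector_lattice => -[[H _] _]; apply: H. Qed.
Lemma Lanti x y : le x y -> le y x -> x = y.
Proof. by move: HL; rewrite /banach_lattice /vector_lattice => -[[_ [H _]] _]; apply: H. Qed.
Lemma Ltrans x y z : le x y -> le y z -> le x z.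
Proof. by move: HL; rewrite /banach_lattice /vector_lattice => -[[_ [_ [H _]]] _]; apply: H. Qed.
Lemma join_ubl x y : le x (join x y).
Proof. by move: HL; rewrite /banach_lattice /vector_lattice => -[[_ [_ [_ [H _]]]] _]; case: (H x y). Qed.
Lemma join_ubr x y : le y (join x y).
Proof. by move: HL; rewrite /banach_lattice /vector_lattice => -[[_ [_ [_ [H _]]]] _]; case: (H x y) => _ []. Qed.
Lemma join_lub x y z : le x z -> le y z -> le (join x y) z.
Proof. by move: HL; rewrite /banach_lattice /vector_lattice => -[[_ [_ [_ [H _]]]] _]; case: (H x y) => _ [_ K]; apply: K. Qed.
Lemma meet_lbl x y : le (meet x y) x.
Proof. by move: HL; rewrite /banach_lattice /vector_lattice => -[[_ [_ [_ [_ [H _]]]]] _]; case: (H x y). Qed.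
Lemma meet_lbr x y : le (meet x y) y.
Proof. by move: HL; rewrite /banach_lattice /vector_lattice => -[[_ [_ [_ [_ [H _]]]]] _]; case: (H x y) => _ []. Qed.
Lemma meet_glb x y z : le z x -> le z y -> le z (meet x y).
Proof. by move: HL; rewrite /banach_lattice /vector_lattice => -[[_ [_ [_ [_ [H _]]]]] _]; case: (H x y) => _ [_ K]; apply: K. Qed.
Lemma Laddr x y z : le x y -> le (x + z) (y + z).
Proof. by move: HL; rewrite /banach_lattice /vector_lattice => -[[_ [_ [_ [_ [_ [H _]]]]]] _]; apply: H. Qed.
Lemma Lscale (a : R) x y : 0 <= a -> le x y -> le (a *: x) (a *: y).
Proof. by move: HL; rewrite /banach_lattice /vector_lattice => -[[_ [_ [_ [_ [_ [_ H]]]]]] _]; apply: H. Qed.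
Lemma Lnorm x y : le (lat_abs join x) (lat_abs join y) -> `|x| <= `|y|.
Proof. by move: HL => -[_ H]; apply: H. Qed.

Lemma Laddl x y z : le x y -> le (z + x) (z + y).
Proof. by rewrite ![z + _]addrC; apply: Laddr. Qed.
Lemma Ladd2 a b c d : le a b -> le c d -> le (a + c) (b + d).
Proof. move=> h1 h2; apply: Ltrans (Laddr c h1) (Laddl b h2). Qed.
Lemma Lsubr x y z : le (x + z) (y + z) -> le x y.
Proof. by move=> /(Laddr (- z)); rewrite !addrK. Qed.
Lemma L0sub x y : le 0 (y - x) <-> le x y.
Proof.
split=> h; first by move: (Laddr x h); rewrite add0r subrK.
by move: (Laddr (- x) h); rewrite subrr.
Qed.
Lemma Lopp x y : le x y -> le (- y) (- x).
Proof. move=> h; apply/L0sub; rewrite opprK addrC; exact/L0sub. Qed.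
Lemma Lsub0 x : le 0 x -> le (- x) 0.
Proof. by move/Lopp; rewrite oppr0. Qed.

Definition pos x := join x 0.
Definition neg x := pos x - x.
Lemma pos_ge0 x : le 0 (pos x). Proof. exact: join_ubr. Qed.
Lemma neg_ge0 x : le 0 (neg x). Proof. exact/L0sub/join_ubl. Qed.
Lemma pos_neg x : x = pos x - neg x.
Proof. by rewrite /neg opprB addrC subrK. Qed.
Lemma pos_id x : le 0 x -> pos x = x.
Proof. by move=> h; apply: Lanti; [apply: join_lub => //; apply: Lrefl|apply: join_ubl]. Qed.

Lemma abs_pos z : le 0 z -> lat_abs join z = z.
Proof.
move=> h; apply: Lanti; last exact: join_ubl.
apply: join_lub; first exact: Lrefl.
exact: Ltrans (Lsub0 h) h.
Qed.
Lemma abs_ge0 x : le 0 (lat_abs join x).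
Proof.
have h1 := join_ubl x (- x); have h2 := join_ubr x (- x).
have := Ladd2 h1 h2; rewrite subrr -mulr2n -scaler_nat => h.
have h0 : (0:R) <= 2^-1 by rewrite invr_ge0 ler0n.
have := Lscale h0 h.
by rewrite scaler0 scalerA mulVf ?scale1r // pnatr_eq0.
Qed.
Lemma norm_mono x y : le 0 y -> le y x -> `|y| <= `|x|.
Proof.
move=> h0 h; apply: Lnorm; rewrite !abs_pos //; exact: Ltrans h0 h.
Qed.
Lemma norm_pos x : `|pos x| <= `|x|.
Proof.
apply: Lnorm; rewrite abs_pos; last exact: pos_ge0.
apply: join_lub; [exact: join_ubl|exact: abs_ge0].
Qed.
Lemma norm_neg x : `|neg x| <= `|x|.
Proof.
apply: Lnorm; rewrite abs_pos; last exact: neg_ge0.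
rewrite /neg.
have : le (pos x) (lat_abs join x + x).
  apply: join_lub.
    by move: (Laddr x (abs_ge0 x)); rewrite add0r.
  by move: (Laddr x (join_ubr x (- x))); rewrite addNr.
by move/(Laddr (- x)); rewrite addrK.
Qed.

Lemma riesz y u w : le 0 y -> le 0 u -> le 0 w -> le y (u + w) ->
  exists y1 y2, [/\ y = y1 + y2, le 0 y1, le y1 u, le 0 y2 & le y2 w].
Proof.
move=> hy hu hw hyuw; exists (meet y u), (y - meet y u); split.
- by rewrite addrC subrK.
- exact: meet_glb.
- exact: meet_lbr.
- exact/L0sub/meet_lbl.
apply: (@Lsubr _ _ (meet y u - w)).
have -> : y - meet y u + (meet y u - w) = y - w by rewrite addrA subrK.
have -> : w + (meet y u - w) = meet y u by rewrite addrC subrK.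
apply: meet_glb.
  by move: (Laddl y (Lsub0 hw)); rewrite addr0.
by move/(Laddr (- w)): hyuw; rewrite addrK.
Qed.

End Lat.

Section Dual.
Variables (R : realType) (X : normedModType R).

Lemma dual_lin (mu : X -> R) a x y : is_dual mu -> mu (a *: x + y) = a * mu x + mu y.
Proof. by case=> h _; apply: h. Qed.
Lemma dual0 (mu : X -> R) : is_dual mu -> mu 0 = 0.
Proof.
move=> h; have := dual_lin 1 0 0 h; rewrite scaler0 add0r mul1r => /eqP; rewrite eq_sym.
by rewrite -subr_eq0 addrK => /eqP.
Qed.
Lemma dualD (mu : X -> R) x y : is_dual mu -> mu (x + y) = mu x + mu y.
Proof. by move=> h; have := dual_lin 1 x y h; rewrite scale1r mul1r. Qed.
Lemma dualZ (mu : X -> R) a x : is_dual mu -> mu (a *: x) = a * mu x.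
Proof. by move=> h; have := dual_lin a x 0 h; rewrite addr0 dual0 // addr0. Qed.
Lemma dualN (mu : X -> R) x : is_dual mu -> mu (- x) = - mu x.
Proof. by move=> h; rewrite -scaleN1r dualZ // mulN1r. Qed.
Lemma dualB (mu : X -> R) x y : is_dual mu -> mu (x - y) = mu x - mu y.
Proof. by move=> h; rewrite dualD // dualN. Qed.

Lemma dual_bound (mu : X -> R) : is_dual mu ->
  exists2 C, 0 < C & forall x, `|mu x| <= C * `|x|.
Proof.
move=> hmu; have := (proj2 hmu) 0.
move/cvgrPdist_lt/(_ 1 ltr01) => /nbhs_normP [d /= d0 hd].
exists (2 / d); first by rewrite divr_gt0.
move=> x; have [->|x0] := eqVneq x 0; first by rewrite dual0 // !normr0 mulr0.
have nx : 0 < `|x| by rewrite normr_gt0.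
set k := d / (2 * `|x|).
have k0 : 0 < k by rewrite divr_gt0 // mulr_gt0.
have kx : k * `|x| = d / 2 by rewrite /k; field; rewrite gt_eqF.
have hb : `|0 - k *: x| < d.
  by rewrite sub0r normrN normrZ gtr0_norm // kx; lra.
have := hd _ hb; rewrite /= dual0 // sub0r normrN dualZ // normrM gtr0_norm // => h.
have : `|mu x| < k^-1 by rewrite -(ltr_pM2l k0) mulfV ?gt_eqF.
by rewrite /k invf_div mulrAC => /ltW.
Qed.

Lemma bound_dual (L : X -> R) :
  (forall a x y, L (a *: x + y) = a * L x + L y) ->
  (exists C, forall x, `|L x| <= C * `|x|) -> is_dual L.
Proof.
move=> hl [C hC]; split => // x.
have L0 : L 0 = 0.
  by have /eqP := hl 1 0 0; rewrite scaler0 add0r mul1r eq_sym -subr_eq0 addrK => /eqP.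
have LB y z : L (y - z) = L y - L z.
  have := hl (-1) z y; rewrite scaleN1r mulN1r addrC => ->; by rewrite addrC.
apply/cvgrPdist_lt => e e0; apply/nbhs_normP.
have C1 : 0 < `|C| + 1 by rewrite ltr_wpDl.
exists (e / (`|C| + 1)); first by rewrite /= divr_gt0.
move=> y /= hy; rewrite -LB; apply: le_lt_trans (hC _) _.
apply: le_lt_trans (ler_wpM2r (normr_ge0 _) (ler_norm C)) _.
apply: le_lt_trans (ler_wpM2r (normr_ge0 _) (ler_wpDr ler01 (lexx `|C|))) _.
by rewrite mulrC -ltr_pdivlMr.
Qed.

Lemma dual_comb (m1 m2 : X -> R) a b : is_dual m1 -> is_dual m2 ->
  is_dual (fun x => a * m1 x + b * m2 x).
Proof.
move=> h1 h2; apply: bound_dual.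
  by move=> c x y; rewrite !dual_lin //; ring.
have [C1 _ hC1] := dual_bound h1; have [C2 _ hC2] := dual_bound h2.
exists (`|a| * C1 + `|b| * C2) => x.
apply: le_trans (ler_normD _ _) _; rewrite mulrDl !normrM -!mulrA.
by apply: lerD; apply: ler_wpM2l.
Qed.

Variables (le : X -> X -> Prop) (meet join : X -> X -> X).
Hypothesis HL : banach_lattice le meet join.

Lemma dual_eq_pos (m1 m2 : X -> R) : is_dual m1 -> is_dual m2 ->
  (forall x, le 0 x -> m1 x = m2 x) -> forall x, m1 x = m2 x.
Proof.
move=> h1 h2 h x; rewrite (pos_neg join x) (dualB _ _ h1) (dualB _ _ h2).
by rewrite (h _ (pos_ge0 HL x)) (h _ (neg_ge0 HL x)).
Qed.

End Dual.

Local Open Scope classical_set_scope.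
Section PosPart.
Variables (R : realType) (X : normedModType R).
Variables (le : X -> X -> Prop) (meet join : X -> X -> X).
Hypothesis HL : banach_lattice le meet join.

Lemma Lpos_add u w : le 0 u -> le 0 w -> le 0 (u + w).
Proof. by move=> hu hw; have := Ladd2 HL hu hw; rewrite addr0. Qed.
Lemma Lpos_scale (a : R) u : 0 <= a -> le 0 u -> le 0 (a *: u).
Proof. by move=> ha hu; have := Lscale HL ha hu; rewrite scaler0. Qed.

Definition Pset (d : X -> R) (u : X) : set R :=
  [set r | exists2 y, le 0 y /\ le y u & d y = r].
Definition P (d : X -> R) (u : X) : R := sup (Pset d u).

Variable d : X -> R.
Hypothesis hd : is_dual d.

Lemma Pset_sup u : le 0 u -> has_sup (Pset d u).
Proof.
move=> hu; split; first by exists 0, 0; [split => //; exact: (Lrefl HL)|exact: dual0].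
have [C C0 hC] := dual_bound hd.
exists (C * `|u|) => _ [y [hy0 hyu] <-].
apply: le_trans (ler_norm _) _; apply: le_trans (hC y) _.
by apply: ler_wpM2l; [exact: ltW | exact: (norm_mono HL)].
Qed.

Lemma P_ub u y : le 0 y -> le y u -> d y <= P d u.
Proof.
move=> h0 h1; apply: sup_upper_bound; last by exists y.
exact: Pset_sup (Ltrans HL h0 h1).
Qed.

Lemma P_le u c : le 0 u -> (forall y, le 0 y -> le y u -> d y <= c) -> P d u <= c.
Proof.
move=> hu h; apply: ge_sup; first by exists 0, 0; [split => //; exact: (Lrefl HL)|exact: dual0].
by move=> _ [y [h0 h1] <-]; apply: h.
Qed.

Lemma P_ge0 u : le 0 u -> 0 <= P d u.
Proof. by move=> hu; rewrite -(dual0 hd); apply: P_ub => //; exact: (Lrefl HL). Qed.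

Lemma P_ge u : le 0 u -> d u <= P d u.
Proof. by move=> hu; apply: P_ub => //; exact: (Lrefl HL). Qed.

Lemma P_bound : exists2 C, 0 < C & forall u, le 0 u -> `|P d u| <= C * `|u|.
Proof.
have [C C0 hC] := dual_bound hd; exists C => // u hu.
rewrite ger0_norm ?P_ge0 //; apply: P_le => // y h0 h1.
apply: le_trans (ler_norm _) _; apply: le_trans (hC y) _.
by apply: ler_wpM2l; [exact: ltW | exact: (norm_mono HL)].
Qed.

Lemma P_add u w : le 0 u -> le 0 w -> P d (u + w) = P d u + P d w.
Proof.
move=> hu hw; have huw := Lpos_add hu hw.
apply/eqP; rewrite eq_le; apply/andP; split.
  apply: P_le => // y h0 h1.
  have [y1 [y2 [-> h10 h1u h20 h2w]]] := riesz HL h0 hu hw h1.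
  by rewrite dualD //; apply: lerD; apply: P_ub.
rewrite -lerBrDr; apply: P_le => // y1 h10 h1u.
rewrite lerBrDr addrC -lerBrDr; apply: P_le => // y2 h20 h2w.
rewrite lerBrDr addrC -dualD //; apply: P_ub.
  exact: Lpos_add.
exact: (Ladd2 HL h1u h2w).
Qed.

Lemma P0 : P d 0 = 0.
Proof.
apply/eqP; rewrite eq_le P_ge0 ?andbT; last exact: (Lrefl HL).
apply: P_le; first exact: (Lrefl HL).
by move=> y h0 h1; rewrite (Lanti HL h1 h0) dual0.
Qed.

Lemma P_scale (a : R) u : 0 <= a -> le 0 u -> P d (a *: u) = a * P d u.
Proof.
rewrite le0r => /orP[/eqP -> | a0] hu; first by rewrite scale0r P0 mul0r.
have hau := Lpos_scale (ltW a0) hu.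
apply/eqP; rewrite eq_le; apply/andP; split.
  apply: P_le => // y h0 h1.
  have -> : y = a *: (a^-1 *: y) by rewrite scalerA mulfV ?gt_eqF ?scale1r.
  rewrite dualZ // ler_pM2l //; apply: P_ub.
    by apply: Lpos_scale h0; rewrite invr_ge0 ltW.
  have := @Lscale _ _ _ _ _ HL (a^-1) _ _ _ h1; rewrite scalerA mulVf ?gt_eqF ?scale1r //.
  by apply; rewrite invr_ge0 ltW.
rewrite mulrC -ler_pdivlMr //; apply: P_le => // y h0 h1.
rewrite ler_pdivlMr // mulrC -dualZ //; apply: P_ub.
  exact: Lpos_scale (ltW a0) h0.
exact: (Lscale HL (ltW a0) h1).
Qed.

Definition pp (x : X) : R := P d (pos join x) - P d (neg join x).

Lemma pp_decomp x u w : le 0 u -> le 0 w -> x = u - w -> pp x = P d u - P d w.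
Proof.
move=> hu hw e; rewrite /pp.
have e2 : pos join x + w = u + neg join x.
  by rewrite /neg; set p := pos join x; rewrite e opprB addrCA (addrC u) subrK.
have := congr1 (P d) e2; rewrite (P_add (pos_ge0 HL x) hw) (P_add hu (neg_ge0 HL x)).
by move=> h; lra.
Qed.

Lemma pp_add x y : pp (x + y) = pp x + pp y.
Proof.
rewrite (@pp_decomp (x + y) (pos join x + pos join y) (neg join x + neg join y));
  try exact: Lpos_add (pos_ge0 HL _) (pos_ge0 HL _); try exact: Lpos_add (neg_ge0 HL _) (neg_ge0 HL _).
  rewrite (P_add (pos_ge0 HL x) (pos_ge0 HL y)) (P_add (neg_ge0 HL x) (neg_ge0 HL y)).
  by rewrite /pp; lra.
by rewrite {1}(pos_neg join x) {1}(pos_neg join y) (opprD (neg join x) (neg join y)); exact: addrACA.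
Qed.

Lemma pp_scale (a : R) x : 0 <= a -> pp (a *: x) = a * pp x.
Proof.
move=> ha.
rewrite (@pp_decomp (a *: x) (a *: pos join x) (a *: neg join x));
  try exact: Lpos_scale ha (pos_ge0 HL _); try exact: Lpos_scale ha (neg_ge0 HL _).
  by rewrite (P_scale ha (pos_ge0 HL x)) (P_scale ha (neg_ge0 HL x)) /pp; lra.
by rewrite {1}(pos_neg join x) scalerBr.
Qed.

Lemma pp_opp x : pp (- x) = - pp x.
Proof.
rewrite (@pp_decomp (- x) (neg join x) (pos join x)); try exact: (pos_ge0 HL); try exact: (neg_ge0 HL).
  by rewrite /pp; lra.
by rewrite {1}(pos_neg join x) opprB.
Qed.

Lemma pp_pos u : le 0 u -> pp u = P d u.
Proof.
move=> hu; rewrite (@pp_decomp u u 0) ?P0 ?subr0 //; exact: (Lrefl HL).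
Qed.

Lemma pp_dual : is_dual pp.
Proof.
apply: bound_dual.
  move=> a x y; rewrite pp_add; congr (_ + _).
  have [ha|ha] := leP 0 a; first exact: pp_scale.
  rewrite -[a]opprK scaleNr pp_opp pp_scale ?mulNr //; lra.
have [C C0 hC] := P_bound; exists (2 * C) => x.
rewrite /pp; apply: le_trans (ler_normB _ _) _.
apply: le_trans (lerD (hC _ (pos_ge0 HL x)) (hC _ (neg_ge0 HL x))) _.
have := norm_pos HL x; have := norm_neg HL x.
move=> h1 h2; have := ler_wpM2l (ltW C0) h1; have := ler_wpM2l (ltW C0) h2.
lra.
Qed.

Lemma pp_pospart : dual_pos_part le d pp.
Proof.
split; first exact: pp_dual.
split; first by move=> phi h; rewrite pp_pos //; apply: P_ge.
split; first by move=> phi h; rewrite pp_pos //; apply: P_ge0.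
move=> m hm h1 h2 phi hphi; rewrite pp_pos //; apply: P_le => // y h0 hy.
apply: le_trans (h1 _ h0) _.
have hxy : le 0 (phi - y) by apply/(L0sub HL).
have := h2 _ hxy; rewrite dualB //; lra.
Qed.

End PosPart.

Section PosPart2.
Variables (R : realType) (X : normedModType R).
Variables (le : X -> X -> Prop) (meet join : X -> X -> X).
Hypothesis HL : banach_lattice le meet join.

Lemma dual_opp (d : X -> R) : is_dual d -> is_dual (fun z => - d z).
Proof.
move=> hd; apply: bound_dual.
  by move=> a x y; rewrite dual_lin //; ring.
have [C _ hC] := dual_bound hd; exists C => x; rewrite normrN; exact: hC.
Qed.

Lemma P_refl (d : X -> R) x : is_dual d -> le 0 x ->
  P le (fun z => - d z) x <= P le d x - d x.
Proof.
move=> hd hx; apply: (P_le HL (dual_opp hd)) => // y h0 h1.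
have e : - d y = d (x - y) - d x by rewrite dualB //; lra.
rewrite e lerD2r; apply: (P_ub HL hd).
  exact/(L0sub HL).
by have := Laddl HL x (Lsub0 HL h0); rewrite addr0.
Qed.

Lemma P_sum (z q : X -> R) x : is_dual z -> is_dual q ->
  (forall y, le 0 y -> - q y <= z y /\ z y <= q y) -> le 0 x ->
  P le z x + P le (fun t => - z t) x <= q x.
Proof.
move=> hz hq hzq hx.
apply: le_trans (lerD (lexx _) (P_refl hz hx)) _.
have : P le z x <= (q x + z x) / 2.
  apply: (P_le HL hz) => // y h0 h1.
  have hxy : le 0 (x - y) by apply/(L0sub HL).
  have [a1 a2] := hzq _ h0; have [b1 b2] := hzq _ hxy; move: b1 b2; rewrite (dualB _ _ hq) (dualB _ _ hz); lra.
lra.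
Qed.

Lemma pp_diff (z : X -> R) x : is_dual z ->
  pp le join z x - pp le join (fun t => - z t) x = z x.
Proof.
move=> hz.
have hd := dual_opp hz.
have := @dual_eq_pos _ _ _ _ _ HL (fun x => pp le join z x - pp le join (fun t => - z t) x) z.
apply => //.
  apply: bound_dual.
    by move=> a u v; rewrite !(dual_lin _ _ _ (pp_dual HL hz)) !(dual_lin _ _ _ (pp_dual HL hd)); ring.
  have [C1 _ h1] := dual_bound (pp_dual HL hz); have [C2 _ h2] := dual_bound (pp_dual HL hd).
  exists (C1 + C2) => u; rewrite mulrDl; apply: le_trans (ler_normB _ _) _.
  exact: lerD.
move=> u hu; rewrite (pp_pos HL hz hu) (pp_pos HL hd hu).
have := P_refl hz hu.
have := P_refl hd hu.
have -> : (fun z0 => - - z z0) = z by apply: funext => t; rewrite opprK.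
lra.
Qed.

End PosPart2.

Local Open Scope classical_set_scope.
Section Main.
Variables (R : realType) (X : normedModType R).
Variables (le : X -> X -> Prop) (meet join : X -> X -> X).
Hypothesis HL : banach_lattice le meet join.
Variable F : (X -> R) -> \bar R.
Hypothesis Hsub : substitutable le F.

Lemma dual_ext (f g : X -> R) : is_dual f -> (forall x, f x = g x) -> is_dual g.
Proof. by move=> hf e; have <- : f = g by apply: funext. Qed.

Lemma dual_c0 : is_dual (fun _ : X => (0 : R)).
Proof. by apply: bound_dual => [a x y|]; [rewrite mulr0 addr0 | exists 0 => x; rewrite normr0 mul0r]. Qed.

Lemma dual_zero (t : X -> R) : is_dual t -> dual_le le (fun=> 0) t -> dual_le le t (fun=> 0) ->
  forall x, t x = 0.
Proof.
move=> ht h1 h2; apply: (dual_eq_pos HL ht dual_c0) => x hx.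
by apply/eqP; rewrite eq_le h2 // h1.
Qed.

Lemma mid_comp (a b : X -> R) : is_dual a -> is_dual b ->
  (forall y, le 0 y -> b y <= a y) ->
  (F (fun x => (a x + b x) / 2)%R + F (fun x => (a x + b x) / 2)%R <= F b + F a)%E.
Proof.
move=> ha hb hab.
have hd : is_dual (a \- b) by apply: dual_ext (dual_comb 1 (-1) ha hb) _ => x /=; ring.
have hp : dual_pos_part le (a \- b) (a \- b).
  split => //; split; first by move=> phi _; exact: lexx.
  split; first by move=> phi hphi /=; rewrite subr_ge0 hab.
  by move=> m _ h1 _.
have hq : dual_pos_part le (b \- a) (fun=> 0).
  split; first exact: dual_c0.
  split; first by move=> phi hphi /=; rewrite subr_le0 hab.
  split; first by move=> phi _; exact: lexx.
  by move=> m _ _ h2.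
have ht : is_dual (fun x => (a x - b x) / 2).
  by apply: dual_ext (dual_comb (2^-1) (- 2^-1) ha hb) _ => x /=; ring.
have ht0 : dual_le le (fun=> 0) (fun x => (a x - b x) / 2).
  by move=> phi hphi; rewrite /= divr_ge0 // subr_ge0 hab.
have htp : dual_le le (fun x => (a x - b x) / 2) (a \- b).
  move=> phi hphi /=; have := hab _ hphi; lra.
have [t12 [ht12 [h1 [h2 hF]]]] := Hsub hb ha hp hq ht ht0 htp.
have t0 := dual_zero ht12 h1 h2.
move: hF.
have -> : (fun x => b x + (a x - b x) / 2 - t12 x) = (fun x => (a x + b x) / 2).
  by apply: funext => x; rewrite t0; field.
have -> : (fun x => a x - (a x - b x) / 2 + t12 x) = (fun x => (a x + b x) / 2).
  by apply: funext => x; rewrite t0; field.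
done.
Qed.

Variable sg : X -> R.
Hypothesis hsg : is_dual sg.
Definition A (e : X -> R) := fun x => (sg x - e x) / 2.
Definition B (e : X -> R) := fun x => (sg x + e x) / 2.

Lemma dualA e : is_dual e -> is_dual (A e).
Proof. by move=> he; apply: dual_ext (dual_comb (2^-1) (- 2^-1) hsg he) _ => x; rewrite /A; ring. Qed.
Lemma dualB' e : is_dual e -> is_dual (B e).
Proof. by move=> he; apply: dual_ext (dual_comb (2^-1) (2^-1) hsg he) _ => x; rewrite /B; ring. Qed.

Lemma step (e : X -> R) : is_dual e -> exists e' : X -> R, [/\ is_dual e',
  (forall x, le 0 x -> pp le join e' x + pp le join (fun t => - e' t) x
                       <= pp le join (fun t => - e t) x) &
  (F (A e') + F (B e') <= F (A e) + F (B e))%E].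
Proof.
move=> he.
have hne := dual_opp he.
have e1 : (B e \- A e) = e by apply: funext => x; rewrite /A /B /=; field.
have e2 : (A e \- B e) = (fun t => - e t) by apply: funext => x; rewrite /A /B /=; field.
have hp : dual_pos_part le (B e \- A e) (pp le join e) by rewrite e1; exact: (pp_pospart HL he).
have hq : dual_pos_part le (A e \- B e) (pp le join (fun t => - e t)) by rewrite e2; exact: (pp_pospart HL hne).
have hpd := pp_dual HL he; have hqd := pp_dual HL hne.
have hp0 : dual_le le (fun=> 0) (pp le join e) by case: hp => _ [_ []].
have ht : is_dual (fun x => pp le join e x / 2).
  by apply: dual_ext (dual_comb (2^-1) 0 hpd hpd) _ => x; ring.
have ht0 : dual_le le (fun=> 0) (fun x => pp le join e x / 2).
  by move=> phi hphi; have := hp0 _ hphi => /=; lra.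
have htp : dual_le le (fun x => pp le join e x / 2) (pp le join e).
  by move=> phi hphi; have := hp0 _ hphi => /=; lra.
have [t12 [ht12 [h1 [h2 hF]]]] := Hsub (dualA he) (dualB' he) hp hq ht ht0 htp.
pose e' := fun x => e x - pp le join e x + 2 * t12 x.
have he' : is_dual e'.
  apply: dual_ext (dual_comb 1 2 (dual_comb 1 (-1) he hpd) ht12) _ => x.
  by rewrite /e'; ring.
exists e'; split => //.
  move=> x hx; rewrite (pp_pos HL he' hx) (pp_pos HL (dual_opp he') hx).
  apply: (P_sum HL) => // y hy.
  have := pp_diff HL y he; have := h1 _ hy; have := h2 _ hy; rewrite /e' /=; lra.
have -> : A e' = (fun x => A e x + pp le join e x / 2 - t12 x).
  by apply: funext => x; rewrite /A /e'; field.
have -> : B e' = (fun x => B e x - pp le join e x / 2 + t12 x).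
  by apply: funext => x; rewrite /B /e'; field.
exact: hF.
Qed.

End Main.

Local Open Scope classical_set_scope.
Section Aux.
Variables (R : realType) (X : normedModType R).

Lemma near_seq (f : nat -> X -> R) (g : X -> R) (s : seq X) (eps : R) : 0 < eps ->
  (forall phi, f n phi @[n --> \oo] --> g phi) ->
  \forall n \near \oo, forall phi, phi \in s -> `|f n phi - g phi| < eps.
Proof.
move=> e0 hc; elim: s => [|phi s IH].
  by apply: nearW => n phi; rewrite in_nil.
have h1 := (cvgrPdist_lt _ _).1 (hc phi) _ e0.
near=> n => psi; rewrite in_cons => /orP[/eqP->|hp].
  by rewrite distrC; near: n; exact: h1.
by move: psi hp; near: n; exact: IH.
Unshelve. all: by end_near.
Qed.

Lemma split_ereal (s : R) (u v : \bar R) : u != -oo%E -> v != -oo%E ->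
  (s%:E < u + v)%E -> exists c1 c2 : R, [/\ (c1%:E < u)%E, (c2%:E < v)%E & s <= c1 + c2].
Proof.
case: u => [u| |] //; case: v => [v| |] //= _ _.
- rewrite lte_fin => h; exists (u - (u + v - s) / 2), (v - (u + v - s) / 2).
  by split; rewrite ?lte_fin; lra.
- move=> _; exists (u - 1), (s - u + 1); split; rewrite ?lte_fin ?ltry //; lra.
- move=> _; exists (s - v + 1), (v - 1); split; rewrite ?lte_fin ?ltry //; lra.
- move=> _; exists s, 0; split; rewrite ?ltry //; lra.
Qed.

End Aux.

Lemma sum_nNy (R : realType) (u v : \bar R) : u != -oo%E -> v != -oo%E -> (u + v)%E != -oo%E.
Proof. by case: u => [u| |] //; case: v. Qed.

Section Lsc.
Variables (R : realType) (X : normedModType R).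
Variable F : (X -> R) -> \bar R.
Hypothesis Hprop : dual_proper F.
Hypothesis Hlsc : weakstar_lsc F.

Lemma lsc_pair (an bn : nat -> X -> R) (a b : X -> R) (S : \bar R) :
  (forall n, is_dual (an n)) -> (forall n, is_dual (bn n)) -> is_dual a -> is_dual b ->
  (forall phi, an n phi @[n --> \oo] --> a phi) ->
  (forall phi, bn n phi @[n --> \oo] --> b phi) ->
  (forall n, (F (an n) + F (bn n) <= S)%E) -> (F a + F b <= S)%E.
Proof.
move=> han hbn ha hb ca cb hS.
have nF mu : is_dual mu -> F mu != -oo%E by move=> h; apply: (proj1 Hprop).
case: S hS => [s| |] hS; last 2 first.
- by rewrite leey.
- have := hS 0%N; rewrite leeNy_eq => /eqP h.
  by have := sum_nNy (nF _ (han 0%N)) (nF _ (hbn 0%N)); rewrite h.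
rewrite leNgt; apply/negP => hlt.
have [c1 [c2 [h1 h2 hc]]] := split_ereal (nF _ ha) (nF _ hb) hlt.
have [s1 [e1 [e10 hs1]]] := Hlsc ha h1.
have [s2 [e2 [e20 hs2]]] := Hlsc hb h2.
have H : \forall n \near \oo,
    (forall phi, phi \in s1 -> `|an n phi - a phi| < e1) /\
    (forall phi, phi \in s2 -> `|bn n phi - b phi| < e2).
  near=> n; split.
    by near: n; apply: near_seq.
  by near: n; apply: near_seq.
have [n [hn1 hn2]] := filter_ex H.
have := lteD (hs1 _ (han n) hn1) (hs2 _ (hbn n) hn2).
move=> /lt_le_trans /(_ (hS n)); rewrite -EFinD lte_fin; lra.
Unshelve. all: by end_near.
Qed.

End Lsc.

Local Open Scope classical_set_scope.
Section Mid.
Variables (R : realType) (X : normedModType R).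
Variables (le : X -> X -> Prop) (meet join : X -> X -> X).
Hypothesis HL : banach_lattice le meet join.
Variable F : (X -> R) -> \bar R.
Hypothesis Hprop : dual_proper F.
Hypothesis Hlsc : weakstar_lsc F.
Hypothesis Hsub : substitutable le F.

Lemma pp_nonneg (d : X -> R) u : is_dual d -> le 0 u -> 0 <= pp le join d u.
Proof. by move=> hd hu; rewrite (pp_pos HL hd hu); exact: (P_ge0 HL hd hu). Qed.

Lemma midpoint (mu1 mu2 : X -> R) : is_dual mu1 -> is_dual mu2 ->
  (F (fun x => (mu1 x + mu2 x) / 2)%R + F (fun x => (mu1 x + mu2 x) / 2)%R
     <= F mu1 + F mu2)%E.
Proof.
move=> h1 h2.
pose sg := fun x => mu1 x + mu2 x.
have hsg : is_dual sg by apply: dual_ext (dual_comb 1 1 h1 h2) _ => x; rewrite /sg; ring.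
pose e0 := fun x => mu2 x - mu1 x.
have he0 : is_dual e0 by apply: dual_ext (dual_comb 1 (-1) h2 h1) _ => x; rewrite /e0; ring.
have hA0 : A sg e0 = mu1 by apply: funext => x; rewrite /A /sg /e0; field.
have hB0 : B sg e0 = mu2 by apply: funext => x; rewrite /B /sg /e0; field.
have : forall e : X -> R, exists e' : X -> R, is_dual e -> [/\ is_dual e',
  (forall x, le 0 x -> pp le join e' x + pp le join (fun t => - e' t) x
                       <= pp le join (fun t => - e t) x) &
  (F (A sg e') + F (B sg e') <= F (A sg e) + F (B sg e))%E].
  move=> e; case: (pselect (is_dual e)) => he.
    by have [e' H] := step HL Hsub hsg he; exists e'.
  by exists e.
case/choice => f hf.
pose en n := iter n f e0.
have hen : forall n, is_dual (en n).
  by elim => [|n IH] //=; case: (hf _ IH).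
have hS : forall n, (F (A sg (en n)) + F (B sg (en n)) <= F (A sg e0) + F (B sg e0))%E.
  elim => [|n IH] /=; first exact: lexx.
  by case: (hf _ (hen n)) => _ _ h; apply: le_trans h IH.
pose q n x := pp le join (fun t => - en n t) x.
pose p n x := pp le join (en n) x.
have hpq n x : le 0 x -> p n.+1 x + q n.+1 x <= q n x.
  by case: (hf _ (hen n)) => _ h _; exact: h.
have hq0 n u : le 0 u -> 0 <= q n u by move=> hu; apply: pp_nonneg (dual_opp (hen n)) hu.
have hp0 n u : le 0 u -> 0 <= p n u by move=> hu; apply: pp_nonneg (hen n) hu.
have hqdec n u : le 0 u -> q n.+1 u <= q n u.
  by move=> hu; have := hpq n u hu; have := hp0 n.+1 u hu; lra.
have hqle n u : le 0 u -> q n u <= q 0%N u.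
  move=> hu; elim: n => [|n IH]; first exact: lexx.
  exact: le_trans (hqdec n u hu) IH.
pose g u := limn (fun n => q n u).
have cvq u : le 0 u -> (fun n => q n u) @ \oo --> g u.
  move=> hu; apply: nonincreasing_is_cvgn.
    by apply/nonincreasing_seqP => n; exact: hqdec.
  by exists 0 => _ [n _ <-]; exact: hq0.
have cvp u : le 0 u -> (fun n => p n u) @ \oo --> 0.
  move=> hu; rewrite -cvg_shiftS.
  apply: (@squeeze_cvgr _ _ _ _ (fun=> 0) (fun n => q n u - q n.+1 u)).
  - apply: nearW => n; apply/andP; split; first exact: hp0.
    by have := hpq n u hu; rewrite /=; lra.
  - exact: cvg_cst.
  rewrite -(subrr (g u)); apply: cvgB; first exact: cvq.
  by have := cvq u hu; rewrite -cvg_shiftS.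
have cve u : le 0 u -> (fun n => en n u) @ \oo --> - g u.
  move=> hu.
  have -> : (fun n => en n u) = (fun n => p n u - q n u).
    by apply: funext => n; rewrite /p /q (pp_diff HL _ (hen n)).
  rewrite -sub0r; apply: cvgB; [exact: cvp | exact: cvq].
pose L x := - g (pos join x) + g (neg join x).
have cvx x : (fun n => en n x) @ \oo --> L x.
  have -> : (fun n => en n x) = (fun n => en n (pos join x) - en n (neg join x)).
    by apply: funext => n; rewrite -dualB // -pos_neg.
  rewrite /L -[g (neg join x)]opprK; apply: cvgB; apply: cve.
    exact: pos_ge0 HL x.
  exact: neg_ge0 HL x.
have hg u : le 0 u -> 0 <= g u /\ g u <= q 0%N u.
  move=> hu; split.
    by apply: limr_ge; [exact: cvgP (cvq u hu) | apply: nearW => n; exact: hq0].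
  by apply: limr_le; [exact: cvgP (cvq u hu) | apply: nearW => n; exact: hqle].
have hL : is_dual L.
  apply: bound_dual.
    move=> a x y.
    have h' : (fun n => en n (a *: x + y)) @ \oo --> a * L x + L y.
      have -> : (fun n => en n (a *: x + y)) = (fun n => a * en n x + en n y).
        by apply: funext => n; rewrite dual_lin.
      by apply: cvgD; [apply: cvgMl_tmp | ]; exact: cvx.
    exact: (cvg_unique (@norm_hausdorff _ _) (cvx (a *: x + y)) h').
  have [C C0 hC] := dual_bound (pp_dual HL (dual_opp he0)).
  exists (2 * C) => x.
  have hp := pos_ge0 HL x; have hn := neg_ge0 HL x.
  have [g1 g2] := hg _ hp; have [g3 g4] := hg _ hn.
  have c1 : `|q 0%N (pos join x)| <= C * `|pos join x| := hC _.
  have c2 : `|q 0%N (neg join x)| <= C * `|neg join x| := hC _.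
  have n1 := norm_pos HL x; have n2 := norm_neg HL x.
  have q1 : q 0%N (pos join x) <= C * `|x|.
    apply: le_trans (ler_norm _) (le_trans c1 _); exact: (ler_wpM2l (ltW C0) n1).
  have q2 : q 0%N (neg join x) <= C * `|x|.
    apply: le_trans (ler_norm _) (le_trans c2 _); exact: (ler_wpM2l (ltW C0) n2).
  rewrite /L; apply: le_trans (ler_normD _ _) _; rewrite normrN.
  rewrite (ger0_norm g1) (ger0_norm g3); lra.
have hLn y : le 0 y -> L y <= 0.
  move=> hy; rewrite (cvg_unique (@norm_hausdorff _ _) (cvx y) (cve y hy)).
  by case: (hg y hy) => ? _; lra.
have hm := mid_comp HL Hsub (dualA hsg hL) (dualB' hsg hL)
  (fun y hy => ltac:(rewrite /A /B; have := hLn y hy; lra)).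
have hlim : (F (A sg L) + F (B sg L) <= F (A sg e0) + F (B sg e0))%E.
  apply: (lsc_pair Hprop Hlsc (an := fun n => A sg (en n)) (bn := fun n => B sg (en n))).
  - by move=> n; apply: dualA.
  - by move=> n; apply: dualB'.
  - exact: dualA.
  - exact: dualB'.
  - move=> phi; rewrite /A; apply: cvgMr_tmp; apply: cvgB; [exact: cvg_cst | exact: cvx].
  - move=> phi; rewrite /B; apply: cvgMr_tmp; apply: cvgD; [exact: cvg_cst | exact: cvx].
  - exact: hS.
rewrite hA0 hB0 in hlim.
have em : (fun x => (A sg L x + B sg L x) / 2) = (fun x => (mu1 x + mu2 x) / 2).
  by apply: funext => x; rewrite /A /B /sg; field.
rewrite em in hm; apply: le_trans hm _; rewrite addeC; exact: hlim.
Qed.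

End Mid.

Local Open Scope classical_set_scope.
Section Conv.
Variables (R : realType) (X : normedModType R).
Variable F : (X -> R) -> \bar R.
Hypothesis Hprop : dual_proper F.
Hypothesis Hlsc : weakstar_lsc F.
Hypothesis Hmid : forall mu1 mu2 : X -> R, is_dual mu1 -> is_dual mu2 ->
  (F (fun x => (mu1 x + mu2 x) / 2)%R + F (fun x => (mu1 x + mu2 x) / 2)%R
     <= F mu1 + F mu2)%E.

Variables (mu nu : X -> R).
Hypotheses (hmu : is_dual mu) (hnu : is_dual nu).
Variables (fa fb : R).
Hypotheses (hfa : F mu = fa%:E) (hfb : F nu = fb%:E).

Let pt (s : R) := fun x => s * mu x + (1 - s) * nu x.
Let aff (s : R) := s * fa + (1 - s) * fb.

Let hpt s : is_dual (pt s).
Proof. exact: dual_comb. Qed.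

Let dyadic n k : (k <= 2 ^ n)%N -> (F (pt (k%:R / 2 ^+ n)) <= (aff (k%:R / 2 ^+ n))%:E)%E.
Proof.
elim: n k => [|n IH] k.
  rewrite expn0 leq_eqVlt ltnS leqn0 => /orP[]/eqP ->; rewrite expr0 divr1.
    have -> : pt 1%:R = mu by apply: funext => x; rewrite /pt; ring.
    by rewrite hfa /aff lee_fin; lra.
  have -> : pt 0%:R = nu by apply: funext => x; rewrite /pt; ring.
  by rewrite hfb /aff lee_fin; lra.
move=> hk.
have h2n : (0 : R) < 2 ^+ n by rewrite exprn_gt0.
have hN : (2 ^+ n.+1 : R) = 2 * 2 ^+ n by rewrite exprS.
have hk2 := odd_double_half k.
set j := k./2 in hk2.
have hj2 : (j.*2)%:R = 2 * (j%:R : R) by rewrite -mul2n natrM.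
move: hk2; case: (odd k) => /= hk2.
  have hj : (j.+1 <= 2 ^ n)%N by move: hk; rewrite -hk2 expnS; lia.
  have hj' : (j <= 2 ^ n)%N by lia.
  have ek : (k%:R : R) = 1 + 2 * j%:R by rewrite -hk2 natrD hj2.
  have es : k%:R / 2 ^+ n.+1 = (j%:R / 2 ^+ n + j.+1%:R / 2 ^+ n) / 2 :> R.
    by rewrite ek hN -addn1 natrD; field; rewrite gt_eqF.
  have em : pt (k%:R / 2 ^+ n.+1) =
      (fun x => (pt (j%:R / 2 ^+ n) x + pt (j.+1%:R / 2 ^+ n) x) / 2).
    by apply: funext => x; rewrite es /pt; field.
  have := Hmid (hpt (j%:R / 2 ^+ n)) (hpt (j.+1%:R / 2 ^+ n)).
  rewrite -em => hm.
  have := leeD (IH _ hj') (IH _ hj); move: hm => /le_trans h /h.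
  have nF : F (pt (k%:R / 2 ^+ n.+1)) != -oo%E by apply: (proj1 Hprop); exact: hpt.
  case: (F (pt (k%:R / 2 ^+ n.+1))) nF => [r| |] // _.
  rewrite -EFinD !lee_fin es /aff; lra.
have hj : (j <= 2 ^ n)%N by move: hk; rewrite -hk2 expnS; lia.
have ek : (k%:R : R) = 2 * j%:R by rewrite -hk2 add0n hj2.
have -> : k%:R / 2 ^+ n.+1 = j%:R / 2 ^+ n :> R.
  by rewrite ek hN; field; rewrite gt_eqF.
exact: IH.
Qed.

Let delta_seq (t e : R) (s : seq X) : 0 < e ->
  exists2 d, 0 < d & forall s', `|s' - t| < d ->
    forall phi, phi \in s -> `|pt s' phi - pt t phi| < e.
Proof.
move=> e0; elim: s => [|phi s [d0 d00 IH]].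
  by exists 1 => // s' _ phi; rewrite in_nil.
set M := `|mu phi - nu phi|.
have M1 : 0 < M + 1 by have := normr_ge0 (mu phi - nu phi); rewrite -/M; lra.
exists (Order.min d0 (e / (M + 1))).
  by rewrite lt_min d00 divr_gt0.
move=> s'; rewrite lt_min => /andP[h1 h2] psi; rewrite in_cons => /orP[/eqP->|hp]; last exact: IH.
have -> : pt s' phi - pt t phi = (s' - t) * (mu phi - nu phi) by rewrite /pt; ring.
rewrite normrM -/M.
have hM : 0 <= M by rewrite /M normr_ge0.
rewrite ltr_pdivlMr // in h2.
apply: le_lt_trans h2; apply: ler_wpM2l => //; lra.
Qed.

Lemma conv_fin t : 0 < t < 1 -> (F (pt t) <= (aff t)%:E)%E.
Proof.
move=> /andP[t0 t1].
rewrite leNgt; apply/negP => hlt.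
have [c [hc1 hc2]] : exists c, aff t < c /\ (c%:E < F (pt t))%E.
  move: hlt; case: (F (pt t)) => [r| |] //.
    by rewrite lte_fin => h; exists ((aff t + r) / 2); rewrite lte_fin; split; lra.
  by move=> _; exists (aff t + 1); rewrite ltry; split => //; lra.
have [s [e [e0 hs]]] := Hlsc (hpt t) hc2.
have [d1 d10 hd1] := delta_seq t s e0.
set d2 := (c - aff t) / (`|fa - fb| + 1).
have d20 : 0 < d2 by rewrite divr_gt0 ?subr_gt0 //; have := normr_ge0 (fa - fb); lra.
set d := Order.min d1 d2.
have d0 : 0 < d by rewrite lt_min d10 d20.
pose n := Num.Def.trunc (d^-1).
have hn : d^-1 < n.+1%:R by rewrite -truncn_le_nat.
have h2n : (n.+1%:R : R) <= 2 ^+ n.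
  by rewrite -natrX ler_nat; apply: ltn_expl.
have h2n0 : (0 : R) < 2 ^+ n by rewrite exprn_gt0.
pose k := Num.Def.trunc (t * 2 ^+ n).
have htn0 : 0 <= t * 2 ^+ n by rewrite mulr_ge0 // ltW.
have hk1 : (k%:R : R) <= t * 2 ^+ n by rewrite -truncn_ge_nat.
have hk2 : t * 2 ^+ n < k.+1%:R by rewrite -truncn_le_nat.
have hk : (k <= 2 ^ n)%N.
  have : (k%:R : R) <= (2 ^ n)%:R.
    rewrite natrX; have : t * 2 ^+ n < 2 ^+ n by rewrite gtr_pMl.
    lra.
  by rewrite ler_nat.
set N : R := 2 ^+ n in h2n h2n0 htn0 hk1 hk2.
have hdN : 1 < d * N.
  by have := lt_le_trans hn h2n; rewrite -(ltr_pM2l d0) mulfV ?gt_eqF.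
set s' := k%:R / N.
have hsd : `|s' - t| < d.
  have e1 : s' - t = - ((t * N - k%:R) / N) by rewrite /s'; field; rewrite gt_eqF.
  rewrite e1 normrN ger0_norm; last by rewrite divr_ge0 ?subr_ge0 // ltW.
  by rewrite ltr_pdivrMr //; lra.
have hsd1 : `|s' - t| < d1 by apply: lt_le_trans hsd _; rewrite ge_min lexx.
have hsd2 : `|s' - t| < d2 by apply: lt_le_trans hsd _; rewrite ge_min lexx orbT.
have haff : aff s' < c.
  have e2 : aff s' - aff t = (s' - t) * (fa - fb) by rewrite /aff; ring.
  have : aff s' - aff t <= `|s' - t| * (`|fa - fb| + 1).
    rewrite e2; apply: le_trans (ler_norm _) _; rewrite normrM ler_wpM2l //; lra.
  have : `|s' - t| * (`|fa - fb| + 1) < c - aff t.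
    by rewrite -ltr_pdivlMr // ltr_wpDl.
  lra.
have h1 := hs (pt s') (hpt s') (fun phi hphi => hd1 s' hsd1 phi hphi).
have h2 := dyadic hk.
have := lt_le_trans h1 h2; rewrite lte_fin; lra.
Qed.

End Conv.

Unset Implicit Arguments.
Theorem proposition2p35 (R : realType) (X : completeNormedModType R)
  (le : X -> X -> Prop) (meet join : X -> X -> X) (F : (X -> R) -> \bar R) :
  banach_lattice le meet join ->
  dual_proper F -> weakstar_lsc F -> substitutable le F ->
  dual_convex F.
Proof.
move=> HL Hp Hl Hs mu nu hmu hnu t ht.
have Hmid := midpoint HL Hp Hl Hs.
have /andP[t0 t1] := ht.
have nmu : F mu != -oo%E by apply: (proj1 Hp).
have nnu : F nu != -oo%E by apply: (proj1 Hp).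
have t10 : 0 < 1 - t by rewrite subr_gt0.
case hfa: (F mu) nmu => [fa| |] // _; case hfb: (F nu) nnu => [fb| |] // _.
- have := conv_fin Hp Hl Hmid hmu hnu hfa hfb ht.
  by rewrite -EFinM -EFinM -EFinD.
- by rewrite gt0_muley ?lte_fin // -EFinM addey // leey.
- by rewrite gt0_muley ?lte_fin // -EFinM addye // leey.
- by rewrite !gt0_muley ?lte_fin // addye // leey.
Qed.
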